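(* Assume the index sets are ordered ($\mathcal I_1=\{1,\dots,l\}$, $\mathcal I_0=\{l+1,\dots,n\}$). Let $\phi:\mathcal X^l\times\mathcal Y^n\to\mathcal X^n$ be any decoder and $\varepsilon\equiv\Pr(\phi(A\mathbf X,\mathbf Y)\neq\mathbf X)>0$. Then $$\sum_{i=l+1}^nH(C_i\mid C_1^{i-1},\mathbf Y)\le\varepsilon\Big[n+\log\frac1\varepsilon+\log e\Big],$$ where $e$ is the base of the natural logarithm and all logarithms (including in entropies) are to base $|\mathcal X|$.
   Context: $\mathcal X,\mathcal Y$ finite, $|\mathcal X|\ge2$; $(\mathbf X,\mathbf Y)$ random on $\mathcal X^n\times\mathcal Y^n$; $A:\mathcal X^n\to\mathcal X^l$; $B:\mathcal X^n\to\mathcal X^{n-l}$ such that $T(x)\equiv(Ax,Bx)\in\mathcal X^n$ (first the entries of $Ax$, then those of $Bx$) defines a bijection $T:\mathcal X^n\to\mathcal X^n$. $\mathbf C=(C_1,\dots,C_n)=T(\mathbf X)$ and $C_1^{i-1}=(C_1,\dots,C_{i-1})$. *)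

(* Defs.v *)
From Stdlib Require Import Reals.
From mathcomp Require Import all_boot.
Set Implicit Arguments.
Local Open Scope R_scope. Unset Strict Implicit. Unset Printing Implicit Defensive.

Definition logb (b x : R) : R := (ln x / ln b).

Notation "\rsum_ ( i | P ) F" := (\big[Rplus/0]_(i | P) F)
  (at level 41, F at level 41, i at level 50).
Notation "\rsum_ ( i : T ) F" := (\big[Rplus/0]_(i : T) F)
  (at level 41, F at level 41, i at level 50).

Definition is_distr (Om : finType) (p : Om -> R) : Prop :=
  (forall w, (0 <= p w)) /\ (\rsum_(w : Om) p w) = 1.

Definition prob (Om : finType) (p : Om -> R) (E : pred Om) : R :=
  \rsum_(w | E w) p w.

Definition condH (b : R) (Om : finType) (p : Om -> R)
  (T1 T2 : finType) (U : Om -> T1) (V : Om -> T2) : R :=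
  (- \rsum_(u : T1) \rsum_(v : T2)
       (let puv := prob p (fun w => (U w == u) && (V w == v)) in
        let pv  := prob p (fun w => V w == v) in
        if Rlt_dec 0 puv then puv * logb b (puv / pv) else 0)).

(* T(x) = (Ax, Bx) as a vector of length l + m (first Ax, then Bx). *)
Definition concat_map (X : finType) (l m : nat)
  (A : {ffun 'I_(l + m) -> X} -> {ffun 'I_l -> X})
  (B : {ffun 'I_(l + m) -> X} -> {ffun 'I_m -> X})
  (x : {ffun 'I_(l + m) -> X}) : {ffun 'I_(l + m) -> X} :=
  [ffun i => match split i with inl j => A x j | inr k => B x k end].

(* Prefix C_1^{i-1} (the first i entries, 0-based indices 0..i-1) of c. *)
Definition cprefix (X : finType) (n : nat) (i : 'I_n) (c : {ffun 'I_n -> X})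
  : {ffun 'I_i -> X} :=
  [ffun j : 'I_i => c (widen_ord (ltnW (ltn_ord i)) j)].

(* Main.v *)
From HB Require Import structures.
Require Import Defs.
From Stdlib Require Import Reals Lra.
From mathcomp Require Import all_boot.
Local Open Scope R_scope.

HB.instance Definition _ := Monoid.isComLaw.Build R 0 Rplus (fun a b c => esym (Rplus_assoc a b c)) Rplus_comm Rplus_0_l.

Lemma rsum_mulr (I : Type) (r : seq I) (P : pred I) (F : I -> R) c :
  (\big[Rplus/0]_(i <- r | P i) F i) * c = \big[Rplus/0]_(i <- r | P i) (F i * c).
Proof.
apply: (big_rec2 (fun a b => a * c = b)); first by rewrite Rmult_0_l.
by move=> i a b _ <-; ring.
Qed.

Lemma rsum_mull (I : Type) (r : seq I) (P : pred I) (F : I -> R) c :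
  c * (\big[Rplus/0]_(i <- r | P i) F i) = \big[Rplus/0]_(i <- r | P i) (c * F i).
Proof.
apply: (big_rec2 (fun a b => c * a = b)); first by rewrite Rmult_0_r.
by move=> i a b _ <-; ring.
Qed.

Lemma rsum_opp (I : Type) (r : seq I) (P : pred I) (F : I -> R) :
  - (\big[Rplus/0]_(i <- r | P i) F i) = \big[Rplus/0]_(i <- r | P i) (- F i).
Proof.
apply: (big_rec2 (fun a b => - a = b)); first by rewrite Ropp_0.
by move=> i a b _ <-; ring.
Qed.

Lemma rsum_le (I : Type) (r : seq I) (P : pred I) (F G : I -> R) :
  (forall i, P i -> F i <= G i) ->
  \big[Rplus/0]_(i <- r | P i) F i <= \big[Rplus/0]_(i <- r | P i) G i.
Proof.
move=> H; apply: (big_rec2 (fun a b => a <= b)); first by lra.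
move=> i a b Pi ab; have := H i Pi; lra.
Qed.

Lemma rsum_ge0 (I : Type) (r : seq I) (P : pred I) (F : I -> R) :
  (forall i, P i -> 0 <= F i) -> 0 <= \big[Rplus/0]_(i <- r | P i) F i.
Proof.
move=> H; apply: (big_rec (fun a => 0 <= a)); first by lra.
move=> i a Pi ab; have := H i Pi; lra.
Qed.

Lemma rsum_sub (I : finType) (P : pred I) (F : I -> R) :
  (forall i, 0 <= F i) -> \big[Rplus/0]_(i | P i) F i <= \big[Rplus/0]_(i : I) F i.
Proof.
move=> H; rewrite [X in _ <= X](bigID P) /=.
have := @rsum_ge0 I (index_enum I) (fun i => ~~ P i) F (fun i _ => H i); lra.
Qed.

Lemma rsum_const (I : finType) (c : R) : \big[Rplus/0]_(i : I) c = INR #|I| * c.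
Proof.
rewrite big_const_seq count_predT (_ : size (index_enum I) = #|I|); last by rewrite cardT enumT.
elim: #|I| => [|k IH]; first by rewrite /= Rmult_0_l.
rewrite iterS IH S_INR; ring.
Qed.

Lemma prob_ge_pt (Om : finType) (p : Om -> R) (E : pred Om) w :
  is_distr p -> E w -> p w <= prob p E.
Proof.
move=> [p0 _] Ew; rewrite /prob (bigD1 w) //=.
have := @rsum_ge0 Om (index_enum Om) (fun i => E i && (i != w)) p (fun i _ => p0 i); lra.
Qed.

Lemma prob_ge0 (Om : finType) (p : Om -> R) (E : pred Om) :
  is_distr p -> 0 <= prob p E.
Proof. by move=> [p0 _]; apply: rsum_ge0. Qed.

Lemma prob_le1 (Om : finType) (p : Om -> R) (E : pred Om) :
  is_distr p -> prob p E <= 1.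
Proof. move=> [p0 p1]; rewrite -p1; exact: rsum_sub. Qed.

Lemma part2 (Om T1 T2 : finType) (U : Om -> T1) (V : Om -> T2) (g : Om -> R)
  (F : T1 -> T2 -> R) :
  \big[Rplus/0]_(u : T1) \big[Rplus/0]_(v : T2)
     ((\big[Rplus/0]_(w | (U w == u) && (V w == v)) g w) * F u v)
  = \big[Rplus/0]_(w : Om) (g w * F (U w) (V w)).
Proof.
have E : forall w, g w * F (U w) (V w) = \big[Rplus/0]_(u : T1) \big[Rplus/0]_(v : T2)
   (if (U w == u) && (V w == v) then g w * F u v else 0).
  move=> w; rewrite (bigD1 (U w)) //= (bigD1 (V w)) //= !eqxx /=.
  rewrite big1 => [|v /negbTE Hv]; last by rewrite eq_sym Hv.
  rewrite big1 => [|u /negbTE Hu]; first by ring.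
  by rewrite big1 // => v _; rewrite eq_sym Hu.
rewrite (eq_bigr _ (fun w _ => E w)) [RHS]exchange_big; apply: eq_bigr => u _.
rewrite [RHS]exchange_big; apply: eq_bigr => v _.
rewrite rsum_mulr big_mkcond; apply: eq_bigr => w _; case: ifP => _ //; ring.
Qed.

Lemma condH_exp (Om T1 T2 : finType) b (p : Om -> R) (U : Om -> T1) (V : Om -> T2) :
  is_distr p ->
  condH b p U V = - \big[Rplus/0]_(w : Om) (p w * logb b
     (prob p (fun w' => (U w' == U w) && (V w' == V w)) / prob p (fun w' => V w' == V w))).
Proof.
move=> pd; rewrite /condH; congr Ropp.
rewrite -(@part2 Om T1 T2 U V p (fun u v => logb b (prob p (fun w' => (U w' == u) && (V w' == v)) / prob p (fun w' => V w' == v)))).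
apply: eq_bigr => u _; apply: eq_bigr => v _ /=.
have H0 := @prob_ge0 Om p (fun w => (U w == u) && (V w == v)) pd.
case: Rlt_dec => [//|H] /=.
have E0 : prob p (fun w => (U w == u) && (V w == v)) = 0 by lra.
rewrite /prob in E0; rewrite E0; ring.
Qed.
Set Implicit Arguments. Unset Strict Implicit.

Definition eqpre (X : finType) (n k : nat) (c c' : {ffun 'I_n -> X}) : bool :=
  [forall j : 'I_n, (j < k)%N ==> (c j == c' j)].

Lemma cprefix_eq (X : finType) n (i : 'I_n) (c c' : {ffun 'I_n -> X}) :
  (cprefix i c == cprefix i c') = eqpre i c c'.
Proof.
apply/eqP/forallP.
  move=> H j; apply/implyP => hj.
  move/ffunP: H => /(_ (Ordinal hj)); rewrite !ffunE.
  have -> : widen_ord (ltnW (ltn_ord i)) (Ordinal hj) = j by apply: val_inj.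
  by move=> ->.
move=> H; apply/ffunP => j; rewrite !ffunE; apply/eqP.
by have /implyP := H (widen_ord (ltnW (ltn_ord i)) j); apply; rewrite /= ltn_ord.
Qed.

Lemma eqpreS (X : finType) n (i : 'I_n) (c c' : {ffun 'I_n -> X}) :
  eqpre i.+1 c c' = (c i == c' i) && eqpre i c c'.
Proof.
apply/forallP/andP.
  move=> H; split; first by have /implyP := H i; apply.
  by apply/forallP => j; apply/implyP => hj; have /implyP := H j; apply; apply: ltnW.
move=> [Hi /forallP H] j; apply/implyP; rewrite ltnS leq_eqVlt => /orP [/eqP hj|hj].
  by have -> : j = i by apply: val_inj.
by have /implyP := H j; apply.
Qed.

Lemma eqpre_full (X : finType) n (c c' : {ffun 'I_n -> X}) :
  eqpre n c c' = (c == c').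
Proof.
apply/forallP/eqP.
  by move=> H; apply/ffunP => j; have /implyP := H j; move/(_ (ltn_ord j))/eqP.
by move=> -> j; rewrite eqxx implybT.
Qed.

Lemma eqpre_A (X : finType) l m
  (A : {ffun 'I_(l + m) -> X} -> {ffun 'I_l -> X})
  (B : {ffun 'I_(l + m) -> X} -> {ffun 'I_m -> X}) x x' :
  eqpre l (concat_map A B x') (concat_map A B x) -> A x' = A x.
Proof.
move=> /forallP H; apply/ffunP => j.
have /implyP := H (lshift m j); move/(_ (ltn_ord j)); rewrite !ffunE.
case: splitP => [j' hj'|k hk].
  have -> : j' = j by apply: ord_inj; rewrite -hj'.
  by move/eqP.
have := ltn_ord j; rewrite (_ : nat_of_ord j = l + k)%N //.
by rewrite ltnNge leq_addr.
Qed.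

Lemma telescope_aux (f : nat -> R) (l N : nat) :
  \big[Rplus/0]_(0 <= i < N | (l <= i)%N) (f i.+1 - f i) = f (maxn N l) - f l.
Proof.
elim: N => [|N IH]; first by rewrite big_geq // max0n; ring.
rewrite big_mkcond big_nat_recr // -big_mkcond IH /=.
case: (leqP l N) => H.
  rewrite (_ : maxn N.+1 l = N.+1); last by apply/maxn_idPl; apply: leqW.
  ring.
rewrite (_ : maxn N.+1 l = l); last by apply/maxn_idPr.
ring.
Qed.

Lemma telescope (f : nat -> R) (l m : nat) :
  \big[Rplus/0]_(i : 'I_(l + m) | (l <= i)%N) (f i.+1 - f i) = f (l + m)%N - f l.
Proof.
rewrite -(big_mkord (fun i => l <= i)%N (fun i => f i.+1 - f i)) telescope_aux.
by rewrite (_ : maxn (l + m) l = l + m)%N //; apply/maxn_idPl; apply: leq_addr.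
Qed.

Lemma ifmul (c : bool) (a x : R) : (if c then a * x else 0) = x * (if c then a else 0).
Proof. by case: c; ring. Qed.

Lemma INR_expn a k : INR (a ^ k) = INR a ^ k.
Proof. elim: k => [|k IH] //; rewrite expnS -multE mult_INR IH /=; ring. Qed.

Unset Implicit Arguments.

Theorem mainTheorem9 (X Y : finType) (l m : nat)
  (A : {ffun 'I_(l + m) -> X} -> {ffun 'I_l -> X})
  (B : {ffun 'I_(l + m) -> X} -> {ffun 'I_m -> X})
  (p : ({ffun 'I_(l + m) -> X} * {ffun 'I_(l + m) -> Y})%type -> R)
  (phi : {ffun 'I_l -> X} -> {ffun 'I_(l + m) -> Y} -> {ffun 'I_(l + m) -> X}) :
  (2 <= #|X|)%N ->
  bijective (concat_map A B) ->
  is_distr p ->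
  let b := INR #|X| in
  let eps := prob p (fun w => phi (A w.1) w.2 != w.1) in
  (0 < eps) ->
  (\big[Rplus/0]_(i : 'I_(l + m) | (l <= i)%N)
      condH b p (fun w => concat_map A B w.1 i)
                (fun w => (cprefix i (concat_map A B w.1), w.2))
   <= eps * (INR (l + m) + logb b (1 / eps) + logb b (exp 1))).
Proof.
move=> hX bijC pd b eps eps_pos.
set C := concat_map A B.
have [p0 p1] := pd.
pose G k w := prob p (fun w' => eqpre k (C w'.1) (C w.1) && (w'.2 == w.2)).
have Gp : forall k w, p w <= G k w.
  move=> k w; apply: prob_ge_pt => //=; rewrite eqxx andbT.
  by apply/forallP => j; rewrite eqxx implybT.
have Gfull : forall w, G (l + m)%N w = p w.
  move=> w; rewrite /G /prob (eq_bigl (fun w' => w' == w)); first by rewrite big_pred1_eq.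
  case: w => x y [x' y'] /=.
  by rewrite eqpre_full (inj_eq (bij_inj bijC)) xpair_eqE.
have condHi : forall i : 'I_(l + m), condH b p (fun w => C w.1 i) (fun w => (cprefix i (C w.1), w.2))
   = - \big[Rplus/0]_(w : _) (p w * logb b (G i.+1 w / G i w)).
  move=> i; rewrite condH_exp //; congr Ropp; apply: eq_bigr => w _.
  congr (_ * logb b (_ / _)).
    rewrite /G /prob; apply: eq_bigl => w' /=.
    by rewrite xpair_eqE cprefix_eq eqpreS andbA.
  by rewrite /G /prob; apply: eq_bigl => w'; rewrite /= xpair_eqE cprefix_eq.
rewrite (eq_bigr _ (fun i _ => condHi i)).
under eq_bigr do rewrite rsum_opp.
rewrite exchange_big.
rewrite (eq_bigr (fun w => p w * (ln (G l w) - ln (p w)) * / ln b)); last first.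
  move=> w _.
  case: (Rle_lt_or_eq_dec 0 (p w) (p0 w)) => hw; last first.
    rewrite -hw big1 => [|i _]; ring.
  have Gpos : forall k, 0 < G k w by move=> k; apply: Rlt_le_trans (Gp k w).
  rewrite (eq_bigr (fun i : 'I_(l + m) => (- (p w * / ln b)) * (ln (G i.+1 w) - ln (G i w)))); last first.
    move=> i _; rewrite /logb /Rdiv ln_mult; [rewrite ln_Rinv; [ring|apply: Gpos] | apply: Gpos | apply: Rinv_0_lt_compat; apply: Gpos].
  rewrite -rsum_mull (telescope (fun k => ln (G k w))) Gfull; ring.
rewrite -rsum_mulr.
have hb : 2 <= b by rewrite /b; change 2 with (INR 2); apply: le_INR; apply/leP.
have lnb : 0 < ln b by rewrite -ln_1; apply: ln_increasing; lra.
have eps1 : eps <= 1 by apply: prob_le1.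
pose K := INR #|{ffun 'I_(l + m) -> X}|.
have hK : K = b ^ (l + m) by rewrite /K card_ffun card_ord INR_expn.
have Kpos : 0 < K by rewrite hK; apply: pow_lt; lra.
have lnK : ln K = INR (l + m) * ln b by rewrite hK ln_pow //; lra.
pose re := eps / K.
pose rc := 1 - eps + eps / K.
have re_pos : 0 < re by apply: Rdiv_lt_0_compat.
have rc_pos : 0 < rc by rewrite /rc; have := Rdiv_lt_0_compat _ _ eps_pos Kpos; lra.
pose r w := if phi (A w.1) w.2 != w.1 then re else rc.
have r_pos : forall w, 0 < r w by move=> w; rewrite /r; case: ifP.
have P1 : forall w, p w * (ln (G l w) - ln (p w)) <= - (p w * ln (r w)) + r w * G l w - p w.
  move=> w; have Gl0 := Gp l w; have rw := r_pos w.
  case: (Rle_lt_or_eq_dec 0 (p w) (p0 w)) => hw; last first.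
    have := Rmult_le_pos _ _ (Rlt_le _ _ rw) (Rle_trans _ _ _ (p0 w) Gl0).
    rewrite -hw; lra.
  have Glp : 0 < G l w by lra.
  have tpos : 0 < r w * G l w / p w.
    by apply: Rdiv_lt_0_compat => //; apply: Rmult_lt_0_compat.
  have ht : ln (r w * G l w / p w) = ln (r w) + ln (G l w) - ln (p w).
    rewrite /Rdiv ln_mult ?ln_mult ?ln_Rinv //; try lra.
      by apply: Rmult_lt_0_compat.
    by apply: Rinv_0_lt_compat.
  have h1 := exp_ineq1_le (ln (r w * G l w / p w)).
  rewrite exp_ln // ht in h1.
  have h2 : p w * (r w * G l w / p w) = r w * G l w by field; lra.
  have h3 := Rmult_le_compat_l (p w) _ _ (Rlt_le _ _ hw) h1.
  nra.
clear condHi.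
have P2 : \big[Rplus/0]_(w : _) (r w * G l w) <= 1.
  rewrite -p1.
  under eq_bigr do rewrite /G /prob rsum_mull big_mkcond.
  rewrite exchange_big; apply: rsum_le => w' _.
  under eq_bigr do rewrite ifmul.
  rewrite -rsum_mull -[X in _ <= X]Rmult_1_r; apply: Rmult_le_compat_l; first exact: p0.
  pose x0 := phi (A w'.1) w'.2.
  pose s x := if x0 != x then re else rc.
  have s_pos : forall x, 0 <= s x by move=> x; rewrite /s; case: ifP; lra.
  apply: (Rle_trans _ (\big[Rplus/0]_(w : _) (if w.2 == w'.2 then s w.1 else 0))).
    apply: rsum_le => w _; case: ifP => [/andP [/eqpre_A hA /eqP h2]|_].
      rewrite -h2 eqxx /s /r /x0 hA h2; exact: Rle_refl.
    by case: ifP => _; [apply: s_pos | apply: Rle_refl].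
  rewrite -(pair_bigA _ (fun x y => if y == w'.2 then s x else 0)).
  under eq_bigr do rewrite -big_mkcond big_pred1_eq.
  rewrite (bigD1 x0) //= {1}/s eqxx /=.
  rewrite (eq_bigr (fun _ => re)); last by move=> x hx; rewrite /s eq_sym hx.
  have := rsum_const {ffun 'I_(l + m) -> X} re; rewrite (bigD1 x0) //= -/K => hs.
  have hKre : K * re = eps by rewrite /re; field; lra.
  have hrc : rc = 1 - eps + re by [].
  lra.
have P3 : \big[Rplus/0]_(w : _) (p w * ln (r w)) = (1 - eps) * ln rc + eps * ln re.
  have pe : \big[Rplus/0]_(w | ~~ (phi (A w.1) w.2 != w.1)) p w = 1 - eps.
    by move: p1; rewrite (bigID (fun w => phi (A w.1) w.2 != w.1)) /= -/(prob _ _) -/eps; lra.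
  rewrite (bigID (fun w => phi (A w.1) w.2 != w.1)) /=.
  rewrite (eq_bigr (fun w => p w * ln re)); last by move=> w hw; rewrite /r hw.
  rewrite [X in _ + X](eq_bigr (fun w => p w * ln rc)); last by move=> w hw; rewrite /r (negbTE hw).
  rewrite -!rsum_mulr pe -/(prob _ _) -/eps; ring.
have S1 : \big[Rplus/0]_(w : _) (p w * (ln (G l w) - ln (p w)))
          <= - ((1 - eps) * ln rc + eps * ln re) + 1 - 1.
  apply: Rle_trans (@rsum_le _ _ _ _ _ (fun w _ => P1 w)) _.
  rewrite (eq_bigr (fun w => (- (p w * ln (r w)) + r w * G l w) + - p w)); last by move=> *; ring.
  rewrite !big_split /= -!rsum_opp P3 p1.
  unfold Rminus; apply: Rplus_le_compat_r; apply: Rplus_le_compat_l; exact: P2.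
have lnre : ln re = ln eps - ln K.
  by rewrite /re /Rdiv ln_mult ?ln_Rinv //; apply: Rinv_0_lt_compat.
have lnie : ln (1 / eps) = - ln eps by rewrite /Rdiv Rmult_1_l ln_Rinv.
have hrc : - ((1 - eps) * ln rc) <= eps.
  pose u := / rc.
  have upos : 0 < u by apply: Rinv_0_lt_compat.
  have hu : rc * u = 1 by rewrite /u Rinv_r //; lra.
  have h1 := exp_ineq1_le (ln u); rewrite exp_ln // /u ln_Rinv // -/u in h1.
  have h2 := Rmult_le_compat_l (1 - eps) _ _ (ltac:(lra) : 0 <= 1 - eps) h1.
  have h3 := Rmult_le_pos _ _ (Rlt_le _ _ re_pos) (Rlt_le _ _ upos).
  have hrc' : rc = 1 - eps + re by [].
  nra.
have T1 : \big[Rplus/0]_(w : _) (p w * (ln (G l w) - ln (p w)))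
          <= eps * (INR (l + m) * ln b + ln (1 / eps) + 1).
  rewrite lnie -lnK; move: S1; rewrite lnre; nra.
apply: (Rle_trans _ (eps * (INR (l + m) * ln b + ln (1 / eps) + 1) * / ln b)).
  by apply: Rmult_le_compat_r => //; left; apply: Rinv_0_lt_compat.
right; rewrite /logb ln_exp; field; lra.
Qed.
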